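(* The Takagi function $T$ has a local maximum at $x\in\mathbb{R}$ if and only if $x\in\mathcal{A}$ and $c_x=0$.
   Context: Let $\phi(x)=\operatorname{dist}(x,\mathbb{Z})$ and $T(x)=\sum_{n=0}^\infty 2^{-n}\phi(2^nx)$. Let $D$ be the set of dyadic rationals. Every $x$ is written $x=k+\sum_{n\ge1}a_n2^{-n}$, $k\in\mathbb{Z}$, $a_n\in\{0,1\}$. $\mathcal{A}=\{x:\partial^+T(x)\neq\varnothing\}$, which equals the set of $x\notin D$ for which there exists $m\ge1$ with $a_{m+2i}+a_{m+2i+1}=1$ for all $i\ge0$; for such $x$ and such $m$, $c_x=m-1-2\sum_{j=1}^{m-1}a_j$ (independent of the choice of $m$). Here $\partial^+f(x)=\{\xi\in\mathbb{R}: \limsup_{h\to0}\frac{f(x+h)-f(x)-\xi h}{|h|}\le0\}$ is the Fréchet superdifferential. *)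

(* Defs.v *)
From Stdlib Require Import Reals ZArith Lra Lia.
Open Scope R_scope.

Definition floorZ (x : R) : Z := Int_part x.

Definition phi (x : R) : R :=
  Rmin (x - IZR (floorZ x)) (IZR (floorZ x) + 1 - x).

Definition takagi_term (x : R) (n : nat) : R := (/ 2) ^ n * phi (2 ^ n * x).

Definition dyadic (x : R) : Prop :=
  exists (k : Z) (n : nat), x = IZR k / 2 ^ n.

(* n-th binary digit a_n (n >= 1) of x = k + sum_{n>=1} a_n 2^{-n}:
   a_n = floor(2^n x) mod 2  (unambiguous for non-dyadic x). *)
Definition digit (x : R) (n : nat) : Z := Z.modulo (floorZ (2 ^ n * x)) 2.

Fixpoint digit_sum (x : R) (N : nat) : Z :=
  match N with
  | O => 0%Z
  | S N' => (digit_sum x N' + digit x (S N'))%Z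
  end.

Definition pair_cond (x : R) (m : nat) : Prop :=
  (1 <= m)%nat /\
  forall i : nat, (digit x (m + 2 * i) + digit x (m + 2 * i + 1))%Z = 1%Z.

Definition in_A (x : R) : Prop := ~ dyadic x /\ exists m : nat, pair_cond x m.

Definition c_with (x : R) (m : nat) : Z :=
  (Z.of_nat m - 1 - 2 * digit_sum x (m - 1))%Z.

Definition local_max (f : R -> R) (x : R) : Prop :=
  exists delta : R, 0 < delta /\
    forall y : R, Rabs (y - x) < delta -> f y <= f x.

(* Main.v *)
Require Import Defs.
From Stdlib Require Import Reals ZArith Lra Lia.
Open Scope R_scope.

Lemma floor_spec z : IZR (floorZ z) <= z < IZR (floorZ z) + 1.
Proof. unfold floorZ. destruct (base_Int_part z). lra. Qed.

Lemma floor_unique q z : IZR q <= z < IZR q + 1 -> floorZ z = q.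
Proof.
  intros [H1 H2]. unfold floorZ, Int_part.
  rewrite <- (up_tech z q H1); [ring| rewrite plus_IZR; simpl; lra].
Qed.

Lemma phi_shift q z : IZR q <= z <= IZR q + 1 ->
  phi z = Rmin (z - IZR q) (IZR q + 1 - z).
Proof.
  intros [H1 H2]. unfold phi. destruct (floor_spec z) as [F1 F2].
  set (F := floorZ z) in *.
  assert (A : (q < F + 1)%Z) by (apply lt_IZR; rewrite plus_IZR; simpl; lra).
  assert (B : (F <= q + 1)%Z) by (apply le_IZR; rewrite plus_IZR; simpl; lra).
  destruct (Z.eq_dec F q) as [E|E]. { subst q. reflexivity. }
  assert (F = q + 1)%Z by lia. subst F. rewrite H in *. rewrite plus_IZR in *.
  simpl in *. assert (z = IZR q + 1) by lra. subst z.
  unfold Rmin; repeat destruct Rle_dec; lra.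
Qed.

Lemma phi_bounds z : 0 <= phi z <= 1/2.
Proof. unfold phi. destruct (floor_spec z). unfold Rmin; destruct Rle_dec; lra. Qed.

Lemma phi_int_shift Q t : phi (IZR Q + t) = phi t.
Proof.
  destruct (floor_spec t) as [F1 F2].
  rewrite (phi_shift (Q + floorZ t)); [|rewrite plus_IZR; lra].
  unfold phi. rewrite plus_IZR.
  replace (IZR Q + t - (IZR Q + IZR (floorZ t))) with (t - IZR (floorZ t)) by ring.
  replace (IZR Q + IZR (floorZ t) + 1 - (IZR Q + t)) with (IZR (floorZ t) + 1 - t) by ring.
  reflexivity.
Qed.

Lemma phi_neg t : phi (- t) = phi t.
Proof.
  destruct (floor_spec t) as [F1 F2].
  rewrite (phi_shift (- floorZ t - 1)); [|rewrite minus_IZR, opp_IZR; lra].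
  unfold phi. rewrite minus_IZR, opp_IZR.
  rewrite Rmin_comm. f_equal; ring.
Qed.

Lemma phi_int Q : phi (IZR Q) = 0.
Proof.
  rewrite (phi_shift Q); [|lra]. unfold Rmin; destruct Rle_dec; lra.
Qed.

Lemma phi_small Q t : 0 <= t <= 1/2 -> phi (IZR Q + t) = t.
Proof.
  intros H. rewrite (phi_shift Q); [|lra]. unfold Rmin; destruct Rle_dec; lra.
Qed.

Lemma floor_half z : floorZ z = Z.div (floorZ (2 * z)) 2.
Proof.
  destruct (floor_spec (2*z)) as [F1 F2].
  set (q := floorZ (2*z)) in *.
  pose proof (Z.div_mod q 2 ltac:(lia)) as E.
  pose proof (Z.mod_pos_bound q 2 ltac:(lia)) as M.
  apply floor_unique.
  assert (IZR q = 2 * IZR (q / 2) + IZR (q mod 2)) as E'.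
  { rewrite E at 1. rewrite plus_IZR, mult_IZR. reflexivity. }
  assert (0 <= IZR (q mod 2) <= 1) by (split; apply IZR_le; lia).
  lra.
Qed.

Lemma floor_double z : floorZ (2 * z) = (2 * floorZ z + floorZ (2 * z) mod 2)%Z.
Proof.
  pose proof (floor_half z) as H. rewrite H. apply Z.div_mod. lia.
Qed.

Lemma mod2_cases q : (q mod 2 = 0 \/ q mod 2 = 1)%Z.
Proof. pose proof (Z.mod_pos_bound q 2 ltac:(lia)). lia. Qed.

Lemma lin_phi z w : floorZ (2 * z) = floorZ (2 * w) ->
  phi w - phi z = (1 - 2 * IZR (floorZ (2 * z) mod 2)) * (w - z).
Proof.
  intros E.
  pose proof (floor_double z) as Dz. pose proof (floor_double w) as Dw.
  assert (Fw : floorZ w = floorZ z) by (rewrite (floor_half w), (floor_half z), E; reflexivity).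
  destruct (floor_spec (2*z)) as [A1 A2]. destruct (floor_spec (2*w)) as [B1 B2].
  rewrite <- E in B1, B2. rewrite <- E in Dw. rewrite Fw in Dw.
  unfold phi. rewrite Fw.
  set (F := floorZ z) in *. set (q := floorZ (2*z)) in *.
  destruct (mod2_cases q) as [r|r]; rewrite r in *; rewrite Dz in A1, A2, B1, B2;
  rewrite plus_IZR, mult_IZR in A1, A2, B1, B2; simpl in *;
  unfold Rmin; repeat destruct Rle_dec; lra.
Qed.

Lemma pair_le z : phi z + phi (2 * z) / 2 <= 1/2.
Proof.
  pose proof (floor_double z) as Dz.
  destruct (floor_spec z) as [A1 A2]. destruct (floor_spec (2*z)) as [B1 B2].
  unfold phi.
  set (F := floorZ z) in *. set (q := floorZ (2*z)) in *.
  destruct (mod2_cases q) as [r|r]; rewrite r in *; rewrite Dz in *;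
  rewrite plus_IZR, mult_IZR in *; simpl in *;
  unfold Rmin; repeat destruct Rle_dec; lra.
Qed.

Lemma pair_eq z : (floorZ (2 * z) mod 2 + floorZ (2 * (2 * z)) mod 2 = 1)%Z ->
  phi z + phi (2 * z) / 2 = 1/2.
Proof.
  intros H.
  pose proof (floor_double z) as Dz. pose proof (floor_double (2*z)) as Dz2.
  destruct (floor_spec z) as [A1 A2]. destruct (floor_spec (2*z)) as [B1 B2].
  destruct (floor_spec (2*(2*z))) as [C1 C2].
  unfold phi.
  set (F := floorZ z) in *. set (q := floorZ (2*z)) in *. set (q2 := floorZ (2*(2*z))) in *.
  destruct (mod2_cases q) as [r|r].
  - assert (r2 : (q2 mod 2 = 1)%Z) by lia. rewrite r2 in Dz2. rewrite r in Dz.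
    rewrite Dz2 in C1, C2. rewrite Dz in *.
    rewrite ?plus_IZR, ?mult_IZR in *.
    rewrite ?plus_IZR, ?mult_IZR in C1, C2.
    unfold Rmin; repeat destruct Rle_dec; lra.
  - assert (r2 : (q2 mod 2 = 0)%Z) by lia. rewrite r2 in Dz2. rewrite r in Dz.
    rewrite Dz2 in C1, C2. rewrite Dz in *.
    rewrite ?plus_IZR, ?mult_IZR in *.
    rewrite ?plus_IZR, ?mult_IZR in C1, C2.
    unfold Rmin; repeat destruct Rle_dec; lra.
Qed.

Fixpoint psum (f : nat -> R) (n : nat) : R :=
  match n with O => 0 | S n' => psum f n' + f n' end.

Lemma sum_psum f n : sum_f_R0 f n = psum f (S n).
Proof. induction n; simpl in *; [ring | rewrite IHn; ring]. Qed.

Lemma diff_sum a b A B : infinite_sum a A -> infinite_sum b B ->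
  infinite_sum (fun k => a k - b k) (A - B).
Proof.
  intros Ha Hb. pose proof (CV_minus _ _ _ _ Ha Hb) as H.
  intros eps He. destruct (H eps He) as [N HN]. exists N. intros n Hn.
  rewrite minus_sum. apply HN; auto.
Qed.

Lemma psum_const e M : (forall k, (k >= M)%nat -> e k = 0) ->
  forall i, psum e (M + i) = psum e M.
Proof.
  intros H i. induction i. { rewrite Nat.add_0_r; reflexivity. }
  rewrite Nat.add_succ_r. simpl. rewrite IHi, H; [ring|lia].
Qed.

Lemma ev_zero e M : (forall k, (k >= M)%nat -> e k = 0) -> infinite_sum e (psum e M).
Proof.
  intros H eps He. exists M. intros n Hn. rewrite sum_psum.
  replace (S n) with (M + (S n - M))%nat by lia. rewrite psum_const; auto.
  unfold Rdist. rewrite Rminus_diag, Rabs_R0. lra.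
Qed.

Lemma lim_freq e l : infinite_sum e l ->
  (forall N, exists n, (n >= N)%nat /\ psum e n <= 0) -> l <= 0.
Proof.
  intros H F. destruct (Rle_dec l 0) as [|Hl]; [assumption|].
  destruct (H l ltac:(lra)) as [N HN]. destruct (F (S N)) as [n [Hn Hp]].
  destruct n as [|n']; [lia|].
  specialize (HN n' ltac:(lia)). rewrite sum_psum in HN. unfold Rdist in HN.
  apply Rabs_def2 in HN. lra.
Qed.

Lemma pow2_S k x : 2 ^ S k * x = 2 * (2 ^ k * x).
Proof. simpl. ring. Qed.

Lemma digit_01 x n : (digit x n = 0 \/ digit x n = 1)%Z.
Proof. unfold digit. apply mod2_cases. Qed.

Lemma digit_rel x k :
  floorZ (2 ^ S k * x) = (2 * floorZ (2 ^ k * x) + digit x (S k))%Z.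
Proof. unfold digit. rewrite pow2_S. apply floor_double. Qed.

Lemma floor_down x y n : floorZ (2 ^ n * y) = floorZ (2 ^ n * x) ->
  forall k, (k <= n)%nat -> floorZ (2 ^ k * y) = floorZ (2 ^ k * x).
Proof.
  intros H k Hk. remember (n - k)%nat as d. revert k Hk Heqd.
  induction d; intros k Hk Hd.
  - replace k with n by lia. exact H.
  - rewrite (floor_half (2^k*y)), (floor_half (2^k*x)), <- !pow2_S.
    rewrite IHd; [reflexivity|lia|lia].
Qed.

Lemma pow_inv_cancel k : (/ 2) ^ k * 2 ^ k = 1.
Proof. rewrite <- Rpow_mult_distr. replace (/2*2) with 1 by field. apply pow1. Qed.

Lemma term_lin x y n : floorZ (2 ^ n * y) = floorZ (2 ^ n * x) ->
  forall k, (k < n)%nat ->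
  takagi_term y k - takagi_term x k = (1 - 2 * IZR (digit x (S k))) * (y - x).
Proof.
  intros H k Hk. pose proof (floor_down x y n H (S k) Hk) as E.
  rewrite !pow2_S in E.
  pose proof (lin_phi (2^k*x) (2^k*y) (eq_sym E)) as L.
  unfold takagi_term. unfold digit. rewrite pow2_S.
  replace ((/ 2) ^ k * phi (2 ^ k * y) - (/ 2) ^ k * phi (2 ^ k * x))
    with ((/2)^k * (phi (2 ^ k * y) - phi (2 ^ k * x))) by ring.
  rewrite L.
  replace ((/ 2) ^ k * ((1 - 2 * IZR (floorZ (2 * (2 ^ k * x)) mod 2)) * (2 ^ k * y - 2 ^ k * x)))
   with (((/ 2) ^ k * 2 ^ k) * ((1 - 2 * IZR (floorZ (2 * (2 ^ k * x)) mod 2)) * (y - x))) by ring.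
  rewrite pow_inv_cancel. ring.
Qed.

Definition Dn (x : R) (n : nat) : Z := (Z.of_nat n - 2 * digit_sum x n)%Z.

Lemma Dn_S x n : Dn x (S n) = (Dn x n + 1 - 2 * digit x (S n))%Z.
Proof. unfold Dn. simpl digit_sum. lia. Qed.

Lemma psum_lin x y n : floorZ (2 ^ n * y) = floorZ (2 ^ n * x) ->
  psum (fun k => takagi_term y k - takagi_term x k) n = IZR (Dn x n) * (y - x).
Proof.
  intros H.
  assert (forall k, (k <= n)%nat ->
    psum (fun k => takagi_term y k - takagi_term x k) k = IZR (Dn x k) * (y - x)).
  { induction k; intros Hk.
    - simpl. unfold Dn. simpl. ring.
    - simpl psum. rewrite IHk by lia. rewrite (term_lin x y n H k) by lia.
      rewrite Dn_S. rewrite minus_IZR, plus_IZR, mult_IZR. ring. }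
  apply H0. lia.
Qed.

Lemma pow2_pos k : 0 < 2 ^ k.
Proof. apply pow_lt. lra. Qed.

Lemma nd_int x : ~ dyadic x -> forall k M, 2 ^ k * x <> IZR M.
Proof.
  intros H k M E. apply H. exists M, k. rewrite <- E. field.
  apply pow_nonzero. lra.
Qed.

Lemma pair_term y k :
  takagi_term y k + takagi_term y (S k) = (/2)^k * (phi (2^k*y) + phi (2 * (2^k*y)) / 2).
Proof. unfold takagi_term. rewrite pow2_S. simpl. field. Qed.

Lemma backward T x m :
  (forall x, infinite_sum (takagi_term x) (T x)) ->
  ~ dyadic x -> pair_cond x m -> c_with x m = 0%Z -> local_max T x.
Proof.
  intros HT Hnd [Hm Hpair] Hc.
  destruct m as [|p]; [lia|].
  assert (HD : Dn x p = 0%Z).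
  { unfold c_with in Hc. unfold Dn. replace (S p - 1)%nat with p in Hc by lia. lia. }
  set (z := 2 ^ p * x). set (j := floorZ z).
  destruct (floor_spec z) as [F1 F2]. fold j in F1, F2.
  assert (Fn : IZR j <> z) by (intro E; apply (nd_int x Hnd p j); auto).
  set (f := z - IZR j).
  assert (Hf : 0 < f < 1) by (unfold f; lra).
  exists (Rmin f (1 - f) * (/2)^p). split.
  { apply Rmult_lt_0_compat; [unfold Rmin; destruct Rle_dec; lra|apply pow_lt; lra]. }
  intros y Hy.
  assert (Fy : floorZ (2 ^ p * y) = floorZ (2 ^ p * x)).
  { fold z. fold j. apply floor_unique.
    assert (Rabs (2^p*y - z) < Rmin f (1-f)).
    { unfold z. replace (2^p*y - 2^p*x) with (2^p*(y-x)) by ring.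
      rewrite Rabs_mult, (Rabs_right (2^p)) by (apply Rle_ge, pow_le; lra).
      apply Rmult_lt_reg_l with ((/2)^p); [apply pow_lt; lra|].
      rewrite <- Rmult_assoc, pow_inv_cancel, Rmult_1_l. lra. }
    apply Rabs_def2 in H. unfold Rmin in H; destruct Rle_dec; unfold f in *; lra. }
  set (e := fun k => takagi_term y k - takagi_term x k).
  pose proof (diff_sum _ _ _ _ (HT y) (HT x)) as HS. fold e in HS.
  assert (P0 : psum e p = 0).
  { unfold e. rewrite (psum_lin x y p Fy), HD. ring. }
  assert (Pair : forall i, e (p + 2 * i)%nat + e (S (p + 2 * i)) <= 0).
  { intro i. unfold e. set (k := (p + 2 * i)%nat).
    replace (takagi_term y k - takagi_term x k + (takagi_term y (S k) - takagi_term x (S k)))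
      with ((takagi_term y k + takagi_term y (S k)) - (takagi_term x k + takagi_term x (S k))) by ring.
    rewrite !pair_term.
    rewrite (pair_eq (2^k*x)).
    2:{ rewrite <- pow2_S, <- pow2_S. specialize (Hpair i). unfold digit in Hpair.
        replace (S p + 2 * i)%nat with (S k) in Hpair by (unfold k; lia).
        replace (S k + 1)%nat with (S (S k)) in Hpair by lia. exact Hpair. }
    pose proof (pair_le (2^k*y)). pose proof (pow_lt (/2) k ltac:(lra)).
    apply Rle_minus. apply Rmult_le_compat_l; lra. }
  assert (Pi : forall i, psum e (p + 2 * i) <= 0).
  { induction i. { rewrite Nat.mul_0_r, Nat.add_0_r. lra. }
    replace (p + 2 * S i)%nat with (S (S (p + 2 * i))) by lia.
    specialize (Pair i). revert IHi Pair. generalize (p + 2 * i)%nat. intros n H1 H2.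
    change (psum e (S (S n))) with (psum e n + e n + e (S n)). lra. }
  assert (T y - T x <= 0).
  { apply (lim_freq e); auto. intros N. exists (p + 2 * N)%nat. split; [lia|apply Pi]. }
  lra.
Qed.

Lemma digit_sum_bd x n : (0 <= digit_sum x n <= Z.of_nat n)%Z.
Proof. induction n; simpl; [lia|]. destruct (digit_01 x (S n)); lia. Qed.

Lemma pow2_IZR i : 2 ^ i = IZR (2 ^ Z.of_nat i).
Proof. apply pow_IZR. Qed.

Lemma small_pow_lt delta : 0 < delta -> exists N, forall k, (k >= N)%nat -> (/2)^k < delta.
Proof.
  intros Hd. destruct (pow_lt_1_zero (/2) ltac:(rewrite Rabs_right; lra) delta Hd) as [N HN].
  exists N. intros k Hk. specialize (HN k Hk). rewrite Rabs_right in HN; auto.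
  apply Rle_ge, pow_le; lra.
Qed.

Lemma pow_half_le r : (/2) ^ S r <= 1/2.
Proof.
  assert (forall r, (/2)^r <= 1).
  { induction r0; simpl; [lra|]. assert (0 <= (/2)^r0) by (apply pow_le; lra). lra. }
  specialize (H r). simpl.
  assert (0 <= (/2)^r) by (apply pow_le; lra). lra.
Qed.

Lemma pow_half_lt1 r : (/2) ^ S r < 1.
Proof. pose proof (pow_half_le r). lra. Qed.

Lemma dyadic_not_max T x :
  (forall x, infinite_sum (takagi_term x) (T x)) -> dyadic x -> ~ local_max T x.
Proof.
  intros HT [K [n Hx]] [delta [Hd Hmax]].
  destruct (small_pow_lt delta Hd) as [N0 HN0].
  set (L := S (n + N0)). set (h := (/2) ^ (n + L)).
  assert (Hh : 0 < h) by (apply pow_lt; lra).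
  set (y := x + h).
  assert (Hy : T y <= T x).
  { apply Hmax. unfold y. replace (x + h - x) with h by ring.
    rewrite Rabs_right by lra. apply HN0. unfold L; lia. }
  assert (Xi : forall i, 2 ^ (n + i) * x = IZR (K * 2 ^ Z.of_nat i)).
  { intro i. rewrite Hx, mult_IZR, <- pow2_IZR, pow_add. field. apply pow_nonzero; lra. }
  assert (Hi : forall i r, 2 ^ (n + i) * (/2) ^ (n + (i + r)) = (/2) ^ r).
  { intros i r. rewrite Nat.add_assoc.
    rewrite (pow_add (/2) (n+i) r), <- Rmult_assoc, (Rmult_comm (2 ^ (n+i))), pow_inv_cancel. ring. }
  assert (Hi2 : forall i, 2 ^ (n + L + i) * (/2) ^ (n + L) = 2 ^ i).
  { intros i. rewrite pow_add.
    rewrite Rmult_comm, <- Rmult_assoc, pow_inv_cancel. ring. }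
  set (e := fun k => takagi_term y k - takagi_term x k).
  pose proof (diff_sum _ _ _ _ (HT y) (HT x)) as HS. fold e in HS.
  assert (Fy : floorZ (2 ^ n * y) = floorZ (2 ^ n * x)).
  { assert (E0 : 2 ^ n * x = IZR K) by (rewrite <- (Nat.add_0_r n), Xi; f_equal; simpl; lia).
    assert (Eh : 2^n * h = (/2)^L).
    { pose proof (Hi 0%nat L) as E. rewrite Nat.add_0_r, Nat.add_0_l in E. exact E. }
    rewrite E0, (floor_unique K (IZR K)) by lra. apply floor_unique.
    unfold y. rewrite Rmult_plus_distr_l, E0, Eh.
    unfold L. pose proof (pow_half_lt1 (n + N0)). pose proof (pow_lt (/2) (S (n+N0)) ltac:(lra)).
    lra. }
  assert (P0 : psum e n = IZR (Dn x n) * h).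
  { unfold e. rewrite (psum_lin x y n Fy). unfold y. f_equal. ring. }
  assert (Emid : forall i, (i < L)%nat -> e (n + i)%nat = h).
  { intros i Hi'. unfold e, takagi_term.
    rewrite Xi, phi_int.
    unfold y. rewrite Rmult_plus_distr_l, Xi. unfold h.
    replace (n + L)%nat with (n + (i + S (L - i - 1)))%nat by lia. rewrite Hi.
    rewrite phi_small by (split; [apply pow_le; lra| apply pow_half_le]).
    rewrite <- pow_add. replace (n + i + S (L - i - 1))%nat with (n + (i + S (L - i - 1)))%nat by lia.
    ring. }
  assert (Eend : forall k, (k >= n + L)%nat -> e k = 0).
  { intros k Hk. unfold e, takagi_term.
    replace k with (n + (L + (k - n - L)))%nat by lia.
    rewrite Xi, phi_int. unfold y. rewrite Rmult_plus_distr_l, Xi. unfold h.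
    replace (n + (L + (k - n - L)))%nat with (n + L + (k - n - L))%nat by lia.
    rewrite Hi2, pow2_IZR, <- plus_IZR, phi_int. ring. }
  assert (Pmid : forall i, (i <= L)%nat -> psum e (n + i) = (IZR (Dn x n) + INR i) * h).
  { induction i; intros Hi'.
    - rewrite Nat.add_0_r, P0. simpl. ring.
    - rewrite Nat.add_succ_r. simpl psum. rewrite IHi by lia. rewrite Emid by lia.
      rewrite S_INR. ring. }
  pose proof (ev_zero e (n + L) Eend) as HS2.
  pose proof (uniqueness_sum _ _ _ HS HS2) as U.
  rewrite Pmid in U by lia.
  assert (IZR (Dn x n) + INR L > 0).
  { pose proof (digit_sum_bd x n). unfold Dn. rewrite INR_IZR_INZ, <- plus_IZR.
    apply IZR_lt. unfold L. lia. }
  assert (0 < (IZR (Dn x n) + INR L) * h) by (apply Rmult_lt_0_compat; lra).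
  lra.
Qed.

Lemma step T x delta n :
  (forall x, infinite_sum (takagi_term x) (T x)) -> ~ dyadic x ->
  0 < delta -> (forall y, Rabs (y - x) < delta -> T y <= T x) ->
  (/2) ^ n < delta ->
  (digit x (S n) = 0%Z -> (Dn x n <= 0)%Z) /\ (digit x (S n) = 1%Z -> (Dn x n >= 0)%Z).
Proof.
  intros HT Hnd Hd Hmax Hn.
  set (z := 2 ^ n * x). set (j := floorZ z).
  destruct (floor_spec z) as [F1 F2]. fold j in F1, F2.
  assert (Fn : IZR j <> z) by (intro E; apply (nd_int x Hnd n j); auto).
  assert (Hp : 0 < (/2)^n) by (apply pow_lt; lra).
  set (y := (IZR (2 * j + 1) - z) * (/2)^n).
  assert (Ey : 2 ^ n * y = IZR (2 * j + 1) - z).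
  { unfold y. transitivity ((/2)^n * 2^n * (IZR (2*j+1) - z)); [ring| rewrite pow_inv_cancel; ring]. }
  assert (Ex : x = z * (/2)^n).
  { unfold z. transitivity ((/2)^n * 2^n * x); [rewrite pow_inv_cancel; ring| ring]. }
  assert (Eyx : y - x = (IZR (2 * j + 1) - 2 * z) * (/2)^n).
  { unfold y. rewrite Ex at 1. ring. }
  rewrite plus_IZR, mult_IZR in Eyx, Ey.
  assert (Hy : T y <= T x).
  { apply Hmax. rewrite Eyx, Rabs_mult, (Rabs_right ((/2)^n)) by lra.
    assert (Rabs (2 * IZR j + 1 - 2 * z) < 1) by (apply Rabs_def1; lra).
    assert (Rabs (2 * IZR j + 1 - 2 * z) * (/ 2) ^ n < 1 * (/2)^n)
      by (apply Rmult_lt_compat_r; lra). lra. }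
  assert (Fy : floorZ (2 ^ n * y) = floorZ (2 ^ n * x)).
  { fold z. fold j. apply floor_unique. rewrite Ey. lra. }
  set (e := fun k => takagi_term y k - takagi_term x k).
  pose proof (diff_sum _ _ _ _ (HT y) (HT x)) as HS. fold e in HS.
  assert (Eend : forall k, (k >= n)%nat -> e k = 0).
  { intros k Hk. unfold e, takagi_term.
    replace k with (n + (k - n))%nat by lia. set (i := (k - n)%nat).
    rewrite (pow_add 2 n i).
    replace (2 ^ n * 2 ^ i * y) with (2 ^ i * (2 ^ n * y)) by ring. rewrite Ey.
    replace (2 ^ i * (2 * IZR j + 1 - z)) with (IZR (2 ^ Z.of_nat i * (2 * j + 1)) + - (2^n * 2^i * x)).
    2:{ rewrite mult_IZR, <- pow2_IZR, plus_IZR, mult_IZR. unfold z. ring. }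
    rewrite phi_int_shift, phi_neg. ring. }
  pose proof (ev_zero e n Eend) as HS2.
  pose proof (uniqueness_sum _ _ _ HS HS2) as U.
  unfold e in U. rewrite (psum_lin x y n Fy), Eyx in U.
  pose proof (digit_rel x n) as DR. fold z j in DR.
  assert (E2 : 2 ^ S n * x = 2 * z) by (unfold z; apply pow2_S).
  destruct (floor_spec (2 ^ S n * x)) as [G1 G2]. rewrite DR, E2 in G1, G2.
  rewrite plus_IZR, mult_IZR in G1, G2.
  assert (Fn2 : 2 * z <> IZR (2 * j + 1)) by (rewrite <- E2; apply nd_int; auto).
  rewrite plus_IZR, mult_IZR in Fn2.
  split; intros Ha; rewrite Ha in G1, G2.
  - destruct (Z_le_gt_dec (Dn x n) 0) as [|Hg]; auto.
    apply Z.gt_lt, IZR_lt in Hg.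
    assert (0 < IZR (Dn x n) * ((2 * IZR j + 1 - 2 * z) * (/ 2) ^ n)).
    { apply Rmult_lt_0_compat; auto. apply Rmult_lt_0_compat; lra. }
    lra.
  - destruct (Z_ge_lt_dec (Dn x n) 0) as [|Hg]; auto.
    apply IZR_lt in Hg.
    assert (0 < IZR (Dn x n) * ((2 * IZR j + 1 - 2 * z) * (/ 2) ^ n)).
    { replace (IZR (Dn x n) * ((2 * IZR j + 1 - 2 * z) * (/ 2) ^ n))
        with ((- IZR (Dn x n)) * ((2 * z - (2 * IZR j + 1)) * (/ 2) ^ n)) by ring.
      assert (2 * z > 2 * IZR j + 1) by lra.
      apply Rmult_lt_0_compat; [lra|]. apply Rmult_lt_0_compat; lra. }
    lra.
Qed.

Lemma forward T x :
  (forall x, infinite_sum (takagi_term x) (T x)) -> local_max T x ->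
  in_A x /\ exists m : nat, pair_cond x m /\ c_with x m = 0%Z.
Proof.
  intros HT Hmax.
  assert (Hnd : ~ dyadic x) by (intro D; exact (dyadic_not_max T x HT D Hmax)).
  destruct Hmax as [delta [Hd Hm]].
  destruct (small_pow_lt delta Hd) as [N0 HN0].
  assert (St : forall n, (n >= N0)%nat ->
    (digit x (S n) = 0%Z -> (Dn x n <= 0)%Z) /\ (digit x (S n) = 1%Z -> (Dn x n >= 0)%Z))
    by (intros n Hn; apply (step T x delta n HT Hnd Hd Hm (HN0 n Hn))).
  assert (Bd : forall i, (Z.abs (Dn x (N0 + i)) <= Z.max (Z.abs (Dn x N0) - Z.of_nat i) 1)%Z).
  { induction i. { rewrite Nat.add_0_r. lia. }
    rewrite Nat.add_succ_r, Dn_S.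
    destruct (St (N0 + i)%nat ltac:(lia)) as [S0 S1].
    destruct (digit_01 x (S (N0 + i))) as [H|H]; rewrite H;
    [specialize (S0 H)|specialize (S1 H)]; lia. }
  set (A := Z.to_nat (Z.abs (Dn x N0))).
  assert (Small : forall n, (n >= N0 + A)%nat -> (Z.abs (Dn x n) <= 1)%Z).
  { intros n Hn. replace n with (N0 + (n - N0))%nat by lia.
    specialize (Bd (n - N0)%nat). unfold A in Hn. lia. }
  set (p := (2 * (N0 + A))%nat).
  assert (Z0 : forall i, Dn x (p + 2 * i) = 0%Z).
  { intros i. specialize (Small (p + 2 * i)%nat ltac:(unfold p; lia)).
    unfold Dn in *. unfold p in *. lia. }
  assert (PC : pair_cond x (S p)).
  { split; [lia|]. intros i. pose proof (Z0 i) as Z1. pose proof (Z0 (S i)) as Z2.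
    replace (p + 2 * S i)%nat with (S (S (p + 2 * i))) in Z2 by lia.
    rewrite !Dn_S, Z1 in Z2.
    replace (S p + 2 * i)%nat with (S (p + 2 * i)) by lia.
    replace (S (p + 2 * i) + 1)%nat with (S (S (p + 2 * i))) by lia. lia. }
  assert (CC : c_with x (S p) = 0%Z).
  { pose proof (Z0 0%nat) as Z1. rewrite Nat.mul_0_r, Nat.add_0_r in Z1.
    unfold c_with. replace (S p - 1)%nat with p by lia. unfold Dn in Z1. lia. }
  split; [split; [auto| exists (S p); exact PC] | exists (S p); split; auto].
Qed.

Theorem corollary2p10 :
  forall T : R -> R,
    (forall x : R, infinite_sum (takagi_term x) (T x)) ->
    forall x : R,
      local_max T x <->
      (in_A x /\ exists m : nat, pair_cond x m /\ c_with x m = 0%Z).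
Proof.
  intros T HT x. split.
  - apply forward; auto.
  - intros [[Hnd _] [m [Hp Hc]]]. exact (backward T x m HT Hnd Hp Hc).
Qed.
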